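(* Under the setting of the single-position greedy algorithm (with $\boldsymbol\epsilon\in[0,1]^V$, rays $R$ with $|R|\ge K$, vectors $\mathbf p_j\in[0,1]^V$, greedy iterates $\mathbf b^t$, $f^t=\sum_i b^t_i$, $E=\sum_i\epsilon_i$, and $\mathrm{OPT}=\min_{S\subseteq R,|S|=K}\sum_i\prod_{j\in S}p_{ij}$), suppose $\mathrm{OPT}>0$ and let $\mathrm{LB}$ be any number with $0<\mathrm{LB}\le \mathrm{OPT}$. Then the approximation ratio $\rho = f^K/\mathrm{OPT}$ satisfies $$\rho \le \frac{E}{\mathrm{LB}\cdot e} + \Big(1-\frac{1}{e}\Big).$$
   Context: Greedy algorithm: $\mathbf b^0=\boldsymbol\epsilon$, $A_0=R$; at iteration $t=1,\dots,K$ choose $j_t\in\arg\min_{j\in A_{t-1}}\sum_i b^{t-1}_i p_{ij}$, set $\mathbf b^t=\mathbf b^{t-1}\odot\mathbf p_{j_t}$ (coordinatewise product), $A_t=A_{t-1}\setminus\{j_t\}$. $e$ is Euler's number. *)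

(* Defs.v *)
From Stdlib Require Import Reals List Lia Lra.
Open Scope R_scope.

(* Positions V = {0,..,n-1}, rays R = {0,..,m-1}. *)
Definition rsum (l : list nat) (f : nat -> R) : R :=
  fold_right (fun i acc => f i + acc) 0 l.
Definition rprod (l : list nat) (f : nat -> R) : R :=
  fold_right (fun i acc => f i * acc) 1 l.

Definition bvec (eps : nat -> R) (p : nat -> nat -> R) (S : list nat) (i : nat) : R :=
  eps i * rprod S (fun j => p i j).

Definition fval (n : nat) (eps : nat -> R) (p : nat -> nat -> R) (S : list nat) : R :=
  rsum (seq 0 n) (bvec eps p S).

(* Greedy run: js = [j_1; ...; j_K]; at step t (0-based) the chosen ray j_{t+1}
   is an available ray minimizing sum_i b^t_i p_ij. *)
Definition is_greedy (n m K : nat) (eps : nat -> R) (p : nat -> nat -> R)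
    (js : list nat) : Prop :=
  length js = K /\
  forall t, (t < K)%nat ->
    let pre := firstn t js in
    let jt := nth t js 0%nat in
    (jt < m)%nat /\ ~ In jt pre /\
    forall j, (j < m)%nat -> ~ In j pre ->
      rsum (seq 0 n) (fun i => bvec eps p pre i * p i jt)
        <= rsum (seq 0 n) (fun i => bvec eps p pre i * p i j).

Definition objS (n : nat) (p : nat -> nat -> R) (S : list nat) : R :=
  rsum (seq 0 n) (fun i => rprod S (fun j => p i j)).

Definition ksubset (m K : nat) (S : list nat) : Prop :=
  NoDup S /\ length S = K /\ (forall j, In j S -> (j < m)%nat).

Definition is_OPT (n m K : nat) (p : nat -> nat -> R) (OPT : R) : Prop :=
  (exists S, ksubset m K S /\ objS n p S = OPT) /\
  (forall S, ksubset m K S -> OPT <= objS n p S).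

(* Main.v *)
Require Import Defs.
From Stdlib Require Import Reals List Lia Lra.
Open Scope R_scope.

Lemma rsum_nil f : rsum nil f = 0. Proof. reflexivity. Qed.
Lemma rsum_cons x l f : rsum (x::l) f = f x + rsum l f. Proof. reflexivity. Qed.
Lemma rprod_nil f : rprod nil f = 1. Proof. reflexivity. Qed.
Lemma rprod_cons x l f : rprod (x::l) f = f x * rprod l f. Proof. reflexivity. Qed.

Lemma rsum_ext l f g : (forall x, In x l -> f x = g x) -> rsum l f = rsum l g.
Proof.
  induction l; intros H; [reflexivity|]. rewrite !rsum_cons, H, IHl; auto.
  intros; apply H; simpl; auto. simpl; auto.
Qed.

Lemma rsum_le l f g : (forall x, In x l -> f x <= g x) -> rsum l f <= rsum l g.
Proof.
  induction l; intros H. rewrite !rsum_nil; lra.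
  rewrite !rsum_cons. apply Rplus_le_compat. apply H; simpl; auto.
  apply IHl; intros; apply H; simpl; auto.
Qed.

Lemma rsum_plus l f g : rsum l (fun x => f x + g x) = rsum l f + rsum l g.
Proof. induction l. rewrite !rsum_nil; lra. rewrite !rsum_cons, IHl; ring. Qed.
Lemma rsum_minus l f g : rsum l (fun x => f x - g x) = rsum l f - rsum l g.
Proof. induction l. rewrite !rsum_nil; lra. rewrite !rsum_cons, IHl; ring. Qed.
Lemma rsum_scal l c f : rsum l (fun x => c * f x) = c * rsum l f.
Proof. induction l. rewrite !rsum_nil; lra. rewrite !rsum_cons, IHl; ring. Qed.
Lemma rsum_const l c : rsum l (fun _ => c) = INR (length l) * c.
Proof. induction l. rewrite !rsum_nil; simpl; lra. rewrite !rsum_cons, IHl.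
  cbn [length]; rewrite S_INR; ring. Qed.
Lemma rsum_zero l : rsum l (fun _ => 0) = 0.
Proof. rewrite rsum_const; ring. Qed.
Lemma rsum_swap (l1 l2 : list nat) (F : nat -> nat -> R) :
  rsum l1 (fun j => rsum l2 (fun i => F i j)) = rsum l2 (fun i => rsum l1 (fun j => F i j)).
Proof.
  induction l1. rewrite rsum_nil. rewrite (rsum_ext l2 _ (fun _ => 0)).
  now rewrite rsum_zero. intros; apply rsum_nil.
  rewrite rsum_cons, IHl1, <- rsum_plus. apply rsum_ext; intros; now rewrite rsum_cons.
Qed.

Lemma rprod_app l1 l2 f : rprod (l1++l2) f = rprod l1 f * rprod l2 f.
Proof. induction l1. cbn [app]; rewrite rprod_nil; ring. cbn [app]; rewrite !rprod_cons, IHl1; ring. Qed.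

Definition bnd (l : list nat) (f : nat -> R) := forall x, In x l -> 0 <= f x <= 1.

Lemma bnd_cons x l f : bnd (x::l) f -> 0 <= f x <= 1 /\ bnd l f.
Proof. unfold bnd; intros H; split; [apply H; simpl; auto|intros; apply H; simpl; auto]. Qed.

Lemma rprod_bounds l f : bnd l f -> 0 <= rprod l f <= 1.
Proof.
  induction l; intros H. rewrite rprod_nil; lra.
  apply bnd_cons in H as [H1 H2]. rewrite rprod_cons. specialize (IHl H2).
  split. apply Rmult_le_pos; lra.
  replace 1 with (1*1) by ring. apply Rmult_le_compat; lra.
Qed.

Lemma rprod_remove_ge l x f : bnd l f -> rprod l f <= rprod (remove Nat.eq_dec x l) f.
Proof.
  induction l; intros H. simpl; lra.
  apply bnd_cons in H as [H1 H2]. simpl remove. destruct (Nat.eq_dec x a).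
  - subst. rewrite rprod_cons. pose proof (rprod_bounds _ _ H2). specialize (IHl H2).
    replace (rprod (remove Nat.eq_dec a l) f) with (1 * rprod (remove Nat.eq_dec a l) f) by ring.
    apply Rmult_le_compat; lra.
  - rewrite !rprod_cons. apply Rmult_le_compat_l; [lra|auto].
Qed.

Lemma bnd_remove l x f : bnd l f -> bnd (remove Nat.eq_dec x l) f.
Proof. unfold bnd; intros H y Hy. apply in_remove in Hy. apply H; tauto. Qed.

Lemma rprod_pull l x f : bnd l f -> In x l -> rprod l f <= f x * rprod (remove Nat.eq_dec x l) f.
Proof.
  induction l; intros H Hin. destruct Hin.
  pose proof H as H0. apply bnd_cons in H as [H1 H2]. simpl remove. destruct (Nat.eq_dec x a).
  - subst. rewrite rprod_cons. apply Rmult_le_compat_l; [lra|]. now apply rprod_remove_ge.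
  - destruct Hin as [Hin|Hin]; [congruence|]. rewrite !rprod_cons.
    specialize (IHl H2 Hin). pose proof (rprod_bounds _ _ (bnd_remove _ x _ H2)).
    pose proof (H0 x (or_intror Hin)).
    replace (f x * (f a * rprod (remove Nat.eq_dec x l) f)) with (f a * (f x * rprod (remove Nat.eq_dec x l) f)) by ring.
    apply Rmult_le_compat_l; lra.
Qed.

Definition notin (pre : list nat) (j : nat) : bool :=
  if in_dec Nat.eq_dec j pre then false else true.

Lemma bnd_filter g l f : bnd l f -> bnd (filter g l) f.
Proof. unfold bnd; intros H y Hy. apply filter_In in Hy. apply H; tauto. Qed.

Lemma rprod_filter S : NoDup S -> forall pre f, bnd S f -> bnd pre f ->
  rprod pre f * rprod (filter (notin pre) S) f <= rprod S f.
Proof.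
  induction S as [|x S IH]; intros HN pre f HS Hp.
  - cbn [filter]. rewrite rprod_nil. pose proof (rprod_bounds _ _ Hp). lra.
  - inversion HN as [|? ? Hxn HNS]; subst. apply bnd_cons in HS as [H1 H2].
    cbn [filter]. unfold notin at 1. destruct (in_dec Nat.eq_dec x pre) as [Hi|Hi].
    + set (pre' := remove Nat.eq_dec x pre).
      assert (E: filter (notin pre) S = filter (notin pre') S).
      { apply filter_ext_in. intros y Hy. unfold notin.
        assert (y <> x) by (intro; subst; contradiction).
        destruct (in_dec Nat.eq_dec y pre), (in_dec Nat.eq_dec y pre'); auto.
        exfalso; apply n; now apply in_in_remove.
        exfalso; apply n; apply in_remove in i; tauto. }
      rewrite E. rewrite rprod_cons.
      pose proof (rprod_pull _ _ _ Hp Hi).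
      pose proof (rprod_bounds _ _ (bnd_filter (notin pre') _ _ H2)).
      pose proof (IH HNS pre' f H2 (bnd_remove _ _ _ Hp)).
      apply Rle_trans with (f x * rprod pre' f * rprod (filter (notin pre') S) f).
      apply Rmult_le_compat_r; [lra|exact H].
      rewrite Rmult_assoc. apply Rmult_le_compat_l; lra.
    + rewrite !rprod_cons.
      pose proof (IH HNS pre f H2 Hp).
      replace (rprod pre f * (f x * rprod (filter (notin pre) S) f)) with
        (f x * (rprod pre f * rprod (filter (notin pre) S) f)) by ring.
      apply Rmult_le_compat_l; lra.
Qed.

Lemma union_bound l f : bnd l f -> 1 - rprod l f <= rsum l (fun j => 1 - f j).
Proof.
  induction l; intros H. rewrite rprod_nil, rsum_nil; lra.
  apply bnd_cons in H as [H1 H2]. rewrite rprod_cons, rsum_cons.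
  specialize (IHl H2). pose proof (rprod_bounds _ _ H2).
  assert (0 <= (1 - f a) * (1 - rprod l f)) by (apply Rmult_le_pos; lra). nra.
Qed.

Lemma firstn_S_app (l : list nat) t : (t < length l)%nat ->
  firstn (S t) l = firstn t l ++ (nth t l 0%nat :: nil).
Proof.
  revert t; induction l; intros t Ht; simpl in Ht. lia.
  destruct t. reflexivity. simpl. f_equal. apply IHl. lia.
Qed.

Lemma In_firstn_In (l : list nat) t x : In x (firstn t l) -> In x l.
Proof. intros H. rewrite <- (firstn_skipn t l). apply in_or_app; auto. Qed.

Lemma exp_pow x k : exp x ^ k = exp (INR k * x).
Proof. induction k. simpl. rewrite Rmult_0_l, exp_0; ring.
  simpl pow. rewrite IHk, <- exp_plus, S_INR. f_equal; ring. Qed.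

Theorem mainTheorem3 (n m K : nat) (eps : nat -> R) (p : nat -> nat -> R)
    (js : list nat) (OPT LB : R) :
  (forall i, (i < n)%nat -> 0 <= eps i <= 1) ->
  (forall i j, (i < n)%nat -> (j < m)%nat -> 0 <= p i j <= 1) ->
  (K <= m)%nat ->
  is_greedy n m K eps p js ->
  is_OPT n m K p OPT ->
  0 < OPT -> 0 < LB -> LB <= OPT ->
  fval n eps p js / OPT
    <= rsum (seq 0 n) eps / (LB * exp 1) + (1 - 1 / exp 1).
Proof.
  intros Heps Hp HKm [Hlen Hgr] [[Sst [[HND [HSl HSm]] HSO]] _] HOPT HLB HLBO.
  set (F := fun t => fval n eps p (firstn t js)).
  set (E := rsum (seq 0 n) eps).
  set (g := rsum (seq 0 n) (fun i => eps i * rprod Sst (fun j => p i j))).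
  assert (Hjs : forall x, In x js -> (x < m)%nat).
  { intros x Hx. destruct (In_nth js x 0%nat Hx) as [k [Hk Hkx]].
    subst x. rewrite Hlen in Hk. now destruct (Hgr k Hk). }
  assert (Hin : forall i, In i (seq 0 n) -> (i < n)%nat).
  { intros i Hi. apply in_seq in Hi. lia. }
  assert (bndS : forall i l, (i < n)%nat -> (forall j, In j l -> (j < m)%nat) -> bnd l (fun j => p i j)).
  { intros i l Hi Hl j Hj. apply Hp; auto. }
  assert (HF0 : F 0%nat = E).
  { unfold F, E, fval. simpl firstn. apply rsum_ext. intros; unfold bvec; rewrite rprod_nil; ring. }
  assert (HFK : F K = fval n eps p js).
  { unfold F. rewrite <- Hlen, firstn_all. reflexivity. }
  assert (HgE : g <= E).
  { apply rsum_le. intros i Hi. apply Hin in Hi.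
    pose proof (rprod_bounds _ _ (bndS i Sst Hi HSm)). pose proof (Heps i Hi).
    replace (eps i) with (eps i * 1) at 2 by ring. apply Rmult_le_compat_l; lra. }
  assert (HgO : g <= OPT).
  { rewrite <- HSO. unfold objS. apply rsum_le. intros i Hi. apply Hin in Hi.
    pose proof (rprod_bounds _ _ (bndS i Sst Hi HSm)). pose proof (Heps i Hi).
    replace (rprod Sst (fun j => p i j)) with (1 * rprod Sst (fun j => p i j)) at 2 by ring.
    apply Rmult_le_compat_r; lra. }
  assert (Hstep : forall t, (t < K)%nat -> INR K * F (S t) <= (INR K - 1) * F t + g).
  { intros t Ht. destruct (Hgr t Ht) as [Hjt [Hnin Hmin]].
    set (pre := firstn t js) in *. set (jt := nth t js 0%nat) in *.
    assert (Hpre : forall x, In x pre -> (x < m)%nat).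
    { intros x Hx. apply Hjs. eapply In_firstn_In; eauto. }
    set (b := fun i => bvec eps p pre i).
    set (h := fun j => rsum (seq 0 n) (fun i => b i * p i j)).
    assert (Hb : forall i, (i < n)%nat -> 0 <= b i <= eps i).
    { intros i Hi. unfold b, bvec. pose proof (rprod_bounds _ _ (bndS i pre Hi Hpre)).
      pose proof (Heps i Hi). split. apply Rmult_le_pos; lra.
      replace (eps i) with (eps i * 1) at 2 by ring. apply Rmult_le_compat_l; lra. }
    assert (HFt : F t = rsum (seq 0 n) b) by reflexivity.
    assert (HFS : F (S t) = h jt).
    { unfold F, h, fval. apply rsum_ext. intros i _. unfold b, bvec.
      rewrite firstn_S_app by lia. rewrite rprod_app. fold pre jt.
      rewrite rprod_cons, rprod_nil. ring. }
    set (S' := filter (notin pre) Sst).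
    assert (HS'm : forall j, In j S' -> (j < m)%nat /\ ~ In j pre).
    { intros j Hj. apply filter_In in Hj as [Hj1 Hj2]. split. auto.
      unfold notin in Hj2. destruct (in_dec Nat.eq_dec j pre); [discriminate|auto]. }
    assert (HhF : 0 <= F t - h jt).
    { rewrite HFt. unfold h. rewrite <- rsum_minus.
      replace 0 with (rsum (seq 0 n) (fun _ => 0)) by apply rsum_zero.
      apply rsum_le. intros i Hi. apply Hin in Hi. pose proof (Hb i Hi). pose proof (Hp i jt Hi Hjt).
      assert (0 <= b i * (1 - p i jt)) by (apply Rmult_le_pos; lra). lra. }
    assert (A : rsum S' (fun j => F t - h j) <= INR K * (F t - h jt)).
    { apply Rle_trans with (rsum S' (fun _ => F t - h jt)).
      apply rsum_le. intros j Hj. destruct (HS'm j Hj). pose proof (Hmin j H H0). unfold h, b; cbv beta in *.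
      lra.
      rewrite rsum_const. apply Rmult_le_compat_r; auto. apply le_INR.
      rewrite <- HSl. apply filter_length_le. }
    assert (B : rsum S' (fun j => F t - h j) =
                rsum (seq 0 n) (fun i => b i * rsum S' (fun j => 1 - p i j))).
    { rewrite (rsum_ext S' _ (fun j => rsum (seq 0 n) (fun i => b i * (1 - p i j)))).
      rewrite rsum_swap. apply rsum_ext. intros i _. now rewrite rsum_scal.
      intros j _. rewrite HFt. unfold h. rewrite <- rsum_minus. apply rsum_ext; intros; ring. }
    assert (C : F t - g <= rsum S' (fun j => F t - h j)).
    { rewrite B, HFt. unfold g. rewrite <- rsum_minus. apply rsum_le. intros i Hi.
      apply Hin in Hi. pose proof (Hb i Hi). pose proof (Heps i Hi).
      assert (bS' : bnd S' (fun j => p i j)).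
      { intros j Hj. apply Hp; auto. apply HS'm; auto. }
      pose proof (union_bound _ _ bS').
      pose proof (rprod_filter Sst HND pre (fun j => p i j) (bndS i Sst Hi HSm) (bndS i pre Hi Hpre)).
      fold S' in H2.
      assert (b i * rprod S' (fun j => p i j) <= eps i * rprod Sst (fun j => p i j)).
      { unfold b, bvec. rewrite Rmult_assoc. apply Rmult_le_compat_l; lra. }
      assert (b i * (1 - rprod S' (fun j => p i j)) <= b i * rsum S' (fun j => 1 - p i j)).
      { apply Rmult_le_compat_l; lra. }
      lra. }
    rewrite HFS. lra. }
  set (c := / exp 1).
  assert (He1 : 2 < exp 1) by (pose proof (exp_ineq1 1 ltac:(lra)); lra).
  assert (Hc : 0 < c < 1).
  { unfold c. split. apply Rinv_0_lt_compat; lra.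
    apply (Rmult_lt_reg_r (exp 1)); [lra|]. rewrite Rinv_l; lra. }
  assert (Hmain : F K <= g + c * (E - g)).
  { destruct K as [|K'].
    - destruct Sst; [|simpl in HSl; lia].
      assert (g = E). { unfold g, E. apply rsum_ext; intros; rewrite rprod_nil; ring. }
      rewrite HF0. nra.
    - set (k := INR (S K')) in *.
      assert (Hk : 0 < k) by (unfold k; apply lt_0_INR; lia).
      set (q := 1 - / k).
      assert (Hq : 0 <= q).
      { unfold q. assert (/ k <= 1).
        { rewrite <- Rinv_1. apply Rinv_le_contravar. lra. unfold k. rewrite S_INR.
          pose proof (pos_INR K'). lra. }
        lra. }
      assert (Hd : forall t, (t < S K')%nat -> F (S t) - g <= q * (F t - g)).
      { intros t Ht. pose proof (Hstep t Ht). fold k in H.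
        apply Rmult_le_reg_l with k; auto.
        replace (k * (q * (F t - g))) with ((k - 1) * (F t - g)) by (unfold q; field; lra).
        lra. }
      assert (Hit : forall t, (t <= S K')%nat -> F t - g <= q ^ t * (F 0%nat - g)).
      { induction t; intros Ht. simpl; lra.
        pose proof (Hd t ltac:(lia)). pose proof (IHt ltac:(lia)).
        simpl pow. rewrite Rmult_assoc. apply Rle_trans with (q * (F t - g)); auto.
        apply Rmult_le_compat_l; auto. }
      assert (Hqe : q ^ S K' <= c).
      { apply Rle_trans with (exp (- / k) ^ S K').
        apply pow_incr. split; auto. unfold q. pose proof (exp_ineq1_le (- / k)). lra.
        rewrite exp_pow. fold k. replace (k * - / k) with (Ropp 1) by (field; lra).
        rewrite exp_Ropp. unfold c; lra. }
      pose proof (Hit (S K') (Nat.le_refl _)).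
      rewrite HF0 in *.
      assert (q ^ S K' * (E - g) <= c * (E - g)) by (apply Rmult_le_compat_r; lra).
      lra. }
  rewrite <- HFK. fold E.
  assert (HE0 : 0 <= E).
  { unfold E. rewrite <- (rsum_zero (seq 0 n)). apply rsum_le. intros i Hi. apply Hin in Hi.
    apply Heps; auto. }
  replace (E / (LB * exp 1) + (1 - 1 / exp 1)) with (c * E / LB + (1 - c)) by (unfold c; field; lra).
  assert (H1 : c * E / OPT <= c * E / LB).
  { unfold Rdiv. apply Rmult_le_compat_l. nra. apply Rinv_le_contravar; lra. }
  assert (H2 : F K / OPT <= c * E / OPT + (1 - c)).
  { replace (c * E / OPT + (1 - c)) with ((c * E + (1 - c) * OPT) / OPT) by (field; lra).
    unfold Rdiv. apply Rmult_le_compat_r. left; apply Rinv_0_lt_compat; lra. nra. }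
  lra.
Qed.
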